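(* If $[x]t$ is a value-open normal linear lambda term with one free variable $x$, then it begins with a lambda abstraction: there exists a normal linear lambda term $[y_1,x]t'$ with two free variables $y_1,x$ such that $t = \lambda y_1.t'$.
   Context: Lambda skeletons: graded sets $\mathrm{SLam}(i)$, least such that $\_ \in \mathrm{SLam}(1)$; $p\in\mathrm{SLam}(j), q\in\mathrm{SLam}(k)\Rightarrow p(q)\in\mathrm{SLam}(j+k)$; $p\in\mathrm{SLam}(i+1)\Rightarrow \lambda\_.p\in\mathrm{SLam}(i)$. A linear lambda term with (ordered list of) free variables $\Gamma$ decorating $p$, written $[\Gamma]t\in\Lambda_1(p)$, is defined by the rules: $[x]x\in\Lambda_1(\_)$; from $[\Gamma]t\in\Lambda_1(p)$, $[\Delta]u\in\Lambda_1(q)$ infer $[\Gamma,\Delta]t(u)\in\Lambda_1(p(q))$; from $[x,\Gamma]t\in\Lambda_1(p)$ infer $[\Gamma]\lambda x.t\in\Lambda_1(\lambda\_.p)$; from $[\Gamma,y,x,\Delta]t\in\Lambda_1(p)$ infer $[\Gamma,x,y,\Delta]t\in\Lambda_1(p)$. A linear term is normal if its skeleton $p$ of degree $i$ lies in $\mathrm{SNF}(i)$, where $\mathrm{SNeu}(i)$, $\mathrm{SNF}(i)$ are defined by the rules (v) $\_\in\mathrm{SNeu}(1)$; (a) $p\in\mathrm{SNeu}(j)$, $q\in\mathrm{SNF}(k)\Rightarrow p(q)\in\mathrm{SNeu}(j+k)$; (s) $p\in\mathrm{SNeu}(i)\Rightarrow p\in\mathrm{SNF}(i)$; ($\ell$)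 $p\in\mathrm{SNF}(i+1)\Rightarrow\lambda\_.p\in\mathrm{SNF}(i)$. A linear term $[x]t$ with one free variable is value-open if $u(x)$ is a subterm of $t$ for some $u$. *)

(* Defs.v *)
From Stdlib Require Import List Arith.
Import ListNotations.

Inductive skel : Type :=
| SHole : skel
| SApp : skel -> skel -> skel
| SLamS : skel -> skel.

Inductive SLam : nat -> skel -> Prop :=
| SLam_hole : SLam 1 SHole
| SLam_app : forall j k p q, SLam j p -> SLam k q -> SLam (j + k) (SApp p q)
| SLam_lam : forall i p, SLam (S i) p -> SLam i (SLamS p).

Inductive term : Type :=
| Var : nat -> term
| App : term -> term -> term
| Lam : nat -> term -> term.

(* [Gamma] t \in Lambda_1(p).  Contexts are kept duplicate-free (linearity:
   the contexts of the two sides of an application are disjoint). *)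
Inductive Lin : list nat -> term -> skel -> Prop :=
| Lin_var : forall x, Lin [x] (Var x) SHole
| Lin_app : forall G D t u p q,
    Lin G t p -> Lin D u q -> NoDup (G ++ D) ->
    Lin (G ++ D) (App t u) (SApp p q)
| Lin_lam : forall x G t p,
    Lin (x :: G) t p -> Lin G (Lam x t) (SLamS p)
| Lin_exch : forall G D x y t p,
    Lin (G ++ y :: x :: D) t p -> Lin (G ++ x :: y :: D) t p.

Inductive SNeu : nat -> skel -> Prop :=
| SNeu_v : SNeu 1 SHole
| SNeu_a : forall j k p q, SNeu j p -> SNF k q -> SNeu (j + k) (SApp p q)
with SNF : nat -> skel -> Prop :=
| SNF_s : forall i p, SNeu i p -> SNF i p
| SNF_l : forall i p, SNF (S i) p -> SNF i (SLamS p).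

Definition normal_linear (G : list nat) (t : term) : Prop :=
  exists p, Lin G t p /\ SNF (length G) p.

(* t has a subterm u(x) in which x is the free variable x (i.e. the
   occurrence of x is not captured by a binder of t). *)
Inductive has_app_free (x : nat) : term -> Prop :=
| haf_here : forall u, has_app_free x (App u (Var x))
| haf_appl : forall t u, has_app_free x t -> has_app_free x (App t u)
| haf_appr : forall t u, has_app_free x u -> has_app_free x (App t u)
| haf_lam : forall y t, y <> x -> has_app_free x t -> has_app_free x (Lam y t).

Definition value_open (x : nat) (t : term) : Prop := has_app_free x t.

(* Main.v *)
Require Import Defs.
From Stdlib Require Import List Lia.
Import ListNotations.

Fixpoint deg (p : skel) : nat :=
  match p with SHole => 1 | SApp a b => deg a + deg b | SLamS a => deg a - 1 end.

Lemma lin_deg G t p : Lin G t p -> length G = deg p.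
Proof.
  induction 1; simpl in *; rewrite ?length_app in *; simpl in *; try lia.
Qed.

Scheme SNeu_ind2 := Induction for SNeu Sort Prop
with SNF_ind2 := Induction for SNF Sort Prop.

Lemma neu_deg : (forall j p, SNeu j p -> j = deg p /\ j >= 1).
Proof.
  apply (SNeu_ind2 (fun j p _ => j = deg p /\ j >= 1) (fun k q _ => k = deg q));
  simpl; intros; try lia; intuition.
Qed.

Lemma nf_deg : (forall j p, SNF j p -> j = deg p).
Proof.
  apply (SNF_ind2 (fun j p _ => j = deg p /\ j >= 1) (fun k q _ => k = deg q));
  simpl; intros; try lia; intuition.
Qed.

Lemma lin_var G t p : Lin G t p -> forall z, t = Var z -> In z G.
Proof.
  induction 1; intros z E; try discriminate.
  - injection E; intros; subst; simpl; auto.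
  - specialize (IHLin z E). rewrite in_app_iff in *; simpl in *; tauto.
Qed.

Lemma haf_in G t p x : Lin G t p -> has_app_free x t -> In x G.
Proof.
  induction 1; intro HH.
  - inversion HH.
  - rewrite in_app_iff. inversion HH; subst; auto.
    right. eapply lin_var; eauto.
  - inversion HH; subst. match goal with Hf : has_app_free _ _ |- _ =>
      specialize (IHLin Hf) end. simpl in IHLin. destruct IHLin; [congruence|auto].
  - specialize (IHLin HH). rewrite in_app_iff in *; simpl in *; tauto.
Qed.

Lemma neu_no_haf G t p : Lin G t p -> SNeu (length G) p -> length G = 1 ->
  forall x, ~ has_app_free x t.
Proof.
  induction 1; intros Hn Hl x0 HH.
  - inversion HH.
  - inversion Hn; subst.
    match goal with Ha : SNeu _ p |- _ => pose proof (neu_deg _ _ Ha) as N1 end.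
    match goal with Ha : SNF _ q |- _ => pose proof (nf_deg _ _ Ha) as N2 end.
    pose proof (lin_deg _ _ _ H) as E1. pose proof (lin_deg _ _ _ H0) as E2.
    rewrite length_app in *.
    assert (D = []) by (destruct D; simpl in *; [auto|lia]). subst D.
    inversion HH; subst.
    + apply lin_var with (z := x0) in H0; auto.
    + rewrite app_nil_r in *. apply (IHLin1 ltac:(replace (length G) with j by lia; auto) ltac:(lia) x0); auto.
    + apply haf_in with (x := x0) in H0; auto.
  - inversion Hn.
  - refine (IHLin _ _ x0 HH); rewrite !length_app in *; simpl in *; auto.
Qed.

Lemma lin_lam_inv G t p : Lin G t p -> forall y b, t = Lam y b ->
  exists p', p = SLamS p' /\ Lin (y :: G) b p'.
Proof.
  induction 1; intros y0 b E; try discriminate.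
  - injection E; intros; subst. eauto.
  - destruct (IHLin y0 b E) as [p' [-> Hl]]. exists p'. split; auto.
    apply (Lin_exch (y0 :: G)). exact Hl.
Qed.

Lemma lin_lamS G t p : Lin G t p -> forall p', p = SLamS p' -> exists y b, t = Lam y b.
Proof.
  induction 1; intros p' E; try discriminate; eauto.
Qed.

Theorem proposition4p8 (x : nat) (t : term) :
  normal_linear [x] t -> value_open x t ->
  exists (y1 : nat) (t' : term), normal_linear [y1; x] t' /\ t = Lam y1 t'.
Proof.
  intros [p [Hl Hn]] Hv.
  destruct t as [z | a b | y b].
  - inversion Hv.
  - exfalso. inversion Hn; subst.
    + eapply (neu_no_haf _ _ _ Hl); simpl; eauto.
    + destruct (lin_lamS _ _ _ Hl p0 eq_refl) as [? [? E]]; discriminate.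
  - destruct (lin_lam_inv _ _ _ Hl y b eq_refl) as [p' [-> Hl']].
    exists y, b. split; auto. exists p'. split; auto.
    inversion Hn; subst; [inversion H|]. simpl. auto.
Qed.
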